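(* Let $\bm{\theta}$ be a target model with softmax outputs $f_{\bm{\theta}}(\bm{x})$, let $p(\boldsymbol{\phi})$ be a (prior/shadow) distribution over model parameters, let $\pi$ be the data population distribution over feature–label pairs, with the target samples belonging to the population, and let $\lambda\in(0,1)$. Define the BASE score \[ \Lambda_{\textsc{BASE}}(\bm{x}_i,y_i;\bm{\theta}) = \sigma\left(-\ell(f_{\bm{\theta}}(\bm{x}_i),y_i) - \log\int e^{-\ell(f_{\boldsymbol{\phi}}(\bm{x}_i),y_i)}p(\boldsymbol{\phi})\,\mathrm{d}\boldsymbol{\phi} + \log\frac{\lambda}{1-\lambda}\right) \] and the RMIA score with parameter $\gamma$ \[ \Lambda_{\textsc{RMIA}}(\bm{x}_i,y_i;\bm{\theta}) = \Pr_{(\bm{x}_j,y_j)\sim\pi}\left[\frac{p(\bm{\theta}\mid\bm{x}_i,y_i)}{p(\bm{\theta}\mid\bm{x}_j,y_j)} \geq \gamma\right], \] where the likelihood ratio is evaluated as $\frac{p(\bm{\theta}\mid\bm{x}_i,y_i)}{p(\bm{\theta}\mid\bm{x}_j,y_j)}=\frac{p(y_i\mid\bm{x}_i,\bm{\theta})/p(y_i\mid\bm{x}_i)}{p(y_j\mid\bm{x}_j,\bm{\theta})/p(y_j\mid\bm{x}_j)}$ with $p(y\mid\bm{x},\bm{\theta})=f_{\bm{\theta}}(\bm{x})_y$ and $p(y\mid\bm{x})=\mathbb{E}_{\boldsymbol{\phi}\sim p(\boldsymbol{\phi})}[f_{\boldsymbol{\phi}}(\bm{x})_y]$. Then the BASE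 attack is equivalent to the RMIA attack with $\gamma=1$; more precisely, the RMIA scores with $\gamma=1$ are related to the BASE scores via a monotone increasing function.
   Context: $\ell(f_{\bm{\theta}}(\bm{x}),y)=-\log f_{\bm{\theta}}(\bm{x})_y$ is the negative log-likelihood loss, and $\sigma$ is the sigmoid function. A score-based membership inference attack predicts ''member'' for target samples whose score exceeds a decision threshold; two score-based attacks are equivalent if for any decision threshold for one attack there exists a decision threshold for the other attack yielding identical hard predictions (in particular they have identical ROC curves). *)

(* Defs.v *)
From HB Require Import structures.
From mathcomp Require Import all_boot all_order all_algebra.
From mathcomp Require Import all_classical all_reals all_analysis.
Set Implicit Arguments. Unset Strict Implicit. Unset Printing Implicit Defensive.
Import Order.TTheory GRing.Theory Num.Theory.
Local Open Scope classical_set_scope.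
Local Open Scope ring_scope.

Section MIA.
Context {R : realType} {dP dX dY : measure_display}
  {Phi : measurableType dP} {X : measurableType dX} {Y : measurableType dY}.

(* f phi x y = f_phi(x)_y : softmax output of model with parameters phi *)
Variable f : Phi -> X -> Y -> R.

Definition sigmoid (t : R) : R := 1 / (1 + expR (- t)).

Definition nll (phi : Phi) (x : X) (y : Y) : R := - ln (f phi x y).

Definition base_score (p : probability Phi R) (theta : Phi) (lam : R)
    (x : X) (y : Y) : R :=
  sigmoid (- nll theta x y
           - ln (fine (\int[p]_phi (expR (- nll phi x y))%:E))
           + ln (lam / (1 - lam))).

Definition marg_lik (p : probability Phi R) (x : X) (y : Y) : R :=
  fine (\int[p]_phi (f phi x y)%:E).

Definition lik_ratio (p : probability Phi R) (theta : Phi)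
    (xi : X) (yi : Y) (xj : X) (yj : Y) : R :=
  (f theta xi yi / marg_lik p xi yi) / (f theta xj yj / marg_lik p xj yj).

Definition rmia_score (p : probability Phi R) (pi : probability (X * Y)%type R)
    (theta : Phi) (gamma : R) (x : X) (y : Y) : R :=
  fine (pi [set z : X * Y | gamma <= lik_ratio p theta x y z.1 z.2]).

End MIA.

(* Main.v *)
Require Import Defs.
From HB Require Import structures.
From mathcomp Require Import all_boot all_order all_algebra.
From mathcomp Require Import all_classical all_reals all_analysis.
From mathcomp Require Import measurable_realfun.
From mathcomp Require Import ring lra.
Import Order.TTheory GRing.Theory Num.Theory.
Local Open Scope classical_set_scope.
Local Open Scope ring_scope.

Lemma int_pos (R : realType) (dP : measure_display) (Phi : measurableType dP)
  (p : probability Phi R) (h : Phi -> R)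
  (hb : forall phi, 0 < h phi <= 1) (hm : measurable_fun setT h) :
  (0 < fine (\int[p]_phi (h phi)%:E))%R.
Proof.
have mh : measurable_fun [set: Phi] (EFin \o h) by exact/measurable_EFinP.
have ge0 : (0 <= \int[p]_phi (h phi)%:E)%E.
  by apply: integral_ge0 => phi _; rewrite lee_fin; case/andP: (hb phi) => /ltW.
have le1 : (\int[p]_phi (h phi)%:E <= 1)%E.
  have H1 : (\int[p]_phi (h phi)%:E <= \int[p]_(phi in [set: Phi]) (cst (1%E : \bar R)) phi)%E.
    apply: ge0_le_integral => //;
      by move=> phi _; rewrite lee_fin; case/andP: (hb phi) => /ltW.
  rewrite integral_cst // mul1e in H1.
  by apply: (le_trans H1); exact: probability_le1.
have fin : (\int[p]_phi (h phi)%:E)%E \is a fin_num.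
  by rewrite ge0_fin_numE // (le_lt_trans le1) // ltey.
apply: fine_gt0; rewrite (le_lt_trans le1) ?ltey // andbT lt0e ge0 andbT.
apply/negP => /eqP H0.
have : (\int[p]_(phi in setT) `|(h phi)%:E| = 0)%E.
  rewrite -H0; apply: eq_integral => phi _.
  by rewrite gee0_abs // lee_fin; case/andP: (hb phi) => /ltW.
move/(ae_eq_integral_abs p measurableT mh) => [N [mN pN0 sub]].
have : p setT = 0%E.
  apply/eqP; rewrite eq_le measure_ge0 andbT -pN0.
  apply: le_measure; rewrite ?inE //.
  move=> phi _; apply: sub => /= /(_ I) /eqP.
  by rewrite eqe; case/andP: (hb phi) => /lt0r_neq0 /negbTE ->.
by rewrite probability_setT => /eqP; rewrite onee_eq0.
Qed.

Theorem theorem2 (R : realType) (dP dX dY : measure_display)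
  (Phi : measurableType dP) (X : measurableType dX) (Y : measurableType dY)
  (f : Phi -> X -> Y -> R)
  (f_softmax : forall phi x y, 0 < f phi x y <= 1)
  (f_meas_phi : forall x y, measurable_fun setT (fun phi => f phi x y))
  (p : probability Phi R) (pi : probability (X * Y)%type R) (theta : Phi)
  (f_meas_data : measurable_fun setT (fun z : X * Y => f theta z.1 z.2))
  (marg_meas : measurable_fun setT (fun z : X * Y => marg_lik f p z.1 z.2))
  (lam : R) (lam_gt0 : 0 < lam) (lam_lt1 : lam < 1) :
  exists g : R -> R, {homo g : a b / a <= b} /\
    forall (x : X) (y : Y),
      rmia_score f p pi theta 1 x y = g (base_score f p theta lam x y).
Proof.
set k := lam / (1 - lam).
have kpos : 0 < k by rewrite divr_gt0 // subr_gt0.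
have mpos x y : 0 < marg_lik f p x y.
  exact: (@int_pos _ _ _ p _ (fun phi => f_softmax phi x y) (f_meas_phi x y)).
have fpos x y : 0 < f theta x y by case/andP: (f_softmax theta x y).
pose r x y := f theta x y / marg_lik f p x y.
have rpos x y : 0 < r x y by rewrite divr_gt0.
have Hbase x y : base_score f p theta lam x y = r x y * k / (r x y * k + 1).
  rewrite /base_score /sigmoid /nll.
  rewrite (eq_integral (fun phi => (f phi x y)%:E)); last first.
    by move=> phi _; rewrite opprK lnK // posrE; case/andP: (f_softmax phi x y).
  rewrite -/(marg_lik f p x y) opprK.
  rewrite -ln_div ?posrE // -lnM ?posrE ?divr_gt0 ?subr_gt0 //.
  rewrite expRN lnK ?posrE ?mulr_gt0 ?divr_gt0 ?invr_gt0 ?subr_gt0 // -/(r x y) -/k.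
  have := mulr_gt0 (rpos x y) kpos; move: (r x y * k) => t t0.
  have t1 : t + 1 != 0 by rewrite lt0r_neq0 // addr_gt0.
  by field; rewrite t1 lt0r_neq0.
pose H (b : R) : R := b / (1 - b) / k.
pose S t := [set z : X * Y | f theta z.1 z.2 <= t * marg_lik f p z.1 z.2].
have mS t : measurable (S t).
  have := measurable_fun_ler f_meas_data (measurable_funM (measurable_cst t) marg_meas).
  move=> /(_ measurableT [set true]); rewrite setTI; apply; done.
have fle (A B : set (X * Y)) : measurable A -> measurable B -> A `<=` B ->
    fine (pi A) <= fine (pi B).
  move=> mA mB AB; apply: fine_le; rewrite ?fin_num_measure //.
  by apply: le_measure; rewrite ?inE.
have fine01 (A : set (X * Y)) : measurable A -> 0 <= fine (pi A) <= 1.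
  move=> mA; rewrite fine_ge0 ?measure_ge0 //=.
  apply: le_trans (fle _ _ mA measurableT (@subsetT _ _)) _.
  by rewrite probability_setT.
have Hmono a b : 0 < a -> a <= b -> b < 1 -> H a <= H b.
  move=> a0 ab b1; rewrite /H ler_pM2r ?invr_gt0 //.
  rewrite ler_pdivrMr ?subr_gt0 ?(le_lt_trans ab) // mulrAC ler_pdivlMr ?subr_gt0 //.
  by nra.
pose g (b : R) : R := if b <= 0 then 0 else if 1 <= b then 1 else fine (pi (S (H b))).
exists g; split.
  move=> a b ab; rewrite /g.
  case: ifPn => a0.
    case: ifPn => // b0; case: ifPn => // b1.
    by case/andP: (fine01 _ (mS (H b))).
  rewrite -ltNge in a0.
  have b0 : 0 < b by apply: lt_le_trans ab.
  rewrite (leNgt b 0) b0 /=.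
  case: ifPn => a1.
    by rewrite (le_trans a1 ab).
  case: ifPn => b1.
    by case/andP: (fine01 _ (mS (H a))).
  rewrite -ltNge in a1 b1.
  apply: fle => // z /=; move/le_trans; apply.
  rewrite ler_pM2r ?mpos //; apply: Hmono => //; by rewrite ltNge.
move=> x y; rewrite Hbase.
have t0 := mulr_gt0 (rpos x y) kpos.
have B0 : 0 < r x y * k / (r x y * k + 1) by rewrite divr_gt0 // addr_gt0.
have B1 : r x y * k / (r x y * k + 1) < 1.
  by rewrite ltr_pdivrMr ?addr_gt0 // mul1r ltrDl.
rewrite /g leNgt B0 /= leNgt B1 /=.
have -> : H (r x y * k / (r x y * k + 1)) = r x y.
  rewrite /H; field.
  have -> : r x y * k + 1 - r x y * k = 1 by ring.
  by rewrite oner_neq0 !lt0r_neq0 ?addr_gt0.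
have E : [set z : X * Y | 1 <= lik_ratio f p theta x y z.1 z.2] = S (r x y).
  apply/funext => z /=.
  change (is_true (1 <= r x y / r z.1 z.2) = is_true (f theta z.1 z.2 <= r x y * marg_lik f p z.1 z.2)).
  by rewrite ler_pdivlMr // mul1r ler_pdivrMr.
by rewrite /rmia_score E.
Qed.
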